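(* Let $R$ be an integral domain of characteristic zero and let $n$ be a positive integer. If $d_1,\dots,d_n$ are nonzero derivations on $R$, then $d_1\circ\cdots\circ d_n\in\mathcal{D}^n(R)\setminus\mathcal{D}^{n-1}(R)$, i.e. it is a derivation of order exactly $n$.
   Context: All rings are commutative with unit. A derivation on $R$ is a map $d\colon R\to R$ with $d(x+y)=d(x)+d(y)$ and $d(xy)=d(x)y+d(y)x$. Inductively: $\mathcal{D}^{-1}(R)=\emptyset$, $\mathcal{D}^0(R)=\{0\}$; for $n>0$, $D\in\mathcal{D}^n(R)$ (derivation of order at most $n$) if $D$ is additive and $D(xy)-D(x)y-D(y)x=B(x,y)$ for all $x,y\in R$, where for each fixed value of one variable, $B$ is a member of $\mathcal{D}^{n-1}(R)$ in the other variable. *)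

(* Defs.v *)
From HB Require Import structures.
From mathcomp Require Import all_boot all_order all_algebra.
Set Implicit Arguments. Unset Strict Implicit. Unset Printing Implicit Defensive.
Import GRing.Theory.
Local Open Scope ring_scope.

Definition is_derivation (R : comNzRingType) (d : R -> R) : Prop :=
  (forall x y : R, d (x + y) = d x + d y) /\
  (forall x y : R, d (x * y) = d x * y + d y * x).

(* is_der_ord n D  <->  D \in D^n(R) (derivation of order at most n). *)
Fixpoint is_der_ord (R : comNzRingType) (n : nat) (D : R -> R) : Prop :=
  match n with
  | 0%N => forall x, D x = 0
  | m.+1 =>
      (forall x y : R, D (x + y) = D x + D y) /\
      (forall x : R, is_der_ord m (fun y => D (x * y) - D x * y - D y * x)) /\
      (forall y : R, is_der_ord m (fun x => D (x * y) - D x * y - D y * x))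
  end.

Definition comp_ders (R : Type) (n : nat) (d : 'I_n -> R -> R) : R -> R :=
  foldr (fun f g => f \o g) id [seq d i | i <- enum 'I_n].

(* Main.v *)
Require Import Defs.
From HB Require Import structures.
From mathcomp Require Import all_boot all_order all_algebra.
From mathcomp Require Import ring.
From Stdlib Require Import Classical.
Local Open Scope ring_scope.
Import GRing.Theory.
Set Implicit Arguments.

Definition delta {R : comNzRingType} (x : R) (D : R -> R) : R -> R :=
  fun y => D (x * y) - D x * y - D y * x.

Lemma d0 {R : comNzRingType} (d : R -> R) : is_derivation d -> d 0 = 0.
Proof. move=> [dA _]; apply: (addrI (d 0)); by rewrite -dA !addr0. Qed.

Lemma dN {R : comNzRingType} (d : R -> R) a : is_derivation d -> d (- a) = - d a.
Proof.
move=> hd; apply: (addrI (d a)); rewrite -hd.1 !subrr; exact: d0.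
Qed.

Lemma dB {R : comNzRingType} (d : R -> R) a b : is_derivation d -> d (a - b) = d a - d b.
Proof. by move=> hd; rewrite hd.1 dN. Qed.

Lemma ord_ext {R : comNzRingType} m : forall D1 D2 : R -> R,
  D1 =1 D2 -> is_der_ord m D1 -> is_der_ord m D2.
Proof.
elim: m => [|m IH] D1 D2 E /=.
  by move=> h x; rewrite -E.
move=> [hA [hx hy]]; split; [|split].
- by move=> x y; rewrite -!E.
- move=> x; apply: IH (hx x) => y; by rewrite !E.
- move=> y; apply: IH (hy y) => x; by rewrite !E.
Qed.

Arguments ord_ext {R m D1 D2}.

Lemma der_ord_intro {R : comNzRingType} m (D : R -> R) :
  (forall x y, D (x + y) = D x + D y) ->
  (forall x, is_der_ord m (delta x D)) -> is_der_ord m.+1 D.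
Proof.
move=> hA hx; split; [exact: hA|split; first exact: hx].
move=> y; apply: ord_ext (hx y) => x; rewrite /delta mulrC.
by rewrite -addrA [- _ - _]addrC addrA.
Qed.

Lemma der_ord_delta {R : comNzRingType} m (D : R -> R) x :
  is_der_ord m.+1 D -> is_der_ord m (delta x D).
Proof. by move=> [_ [h _]]; exact: h. Qed.

Lemma der_ord_add {R : comNzRingType} m (D : R -> R) :
  is_der_ord m D -> forall x y, D (x + y) = D x + D y.
Proof. case: m => [|m] /= h x y; last exact: h.1. by rewrite !h addr0. Qed.
Arguments der_ord_add {R m D}.
Arguments der_ord_delta {R m D}.

Lemma ord_plus {R : comNzRingType} m : forall F G : R -> R,
  is_der_ord m F -> is_der_ord m G -> is_der_ord m (fun y => F y + G y).
Proof.
elim: m => [|m IH] F G.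
  by move=> hF hG x /=; rewrite hF hG addr0.
move=> hF hG; apply: der_ord_intro.
  move=> x y; rewrite (der_ord_add hF) (der_ord_add hG); ring.
move=> x; apply: ord_ext (IH _ _ (der_ord_delta x hF) (der_ord_delta x hG)).
move=> y; rewrite /delta; ring.
Qed.

Lemma ord_scale {R : comNzRingType} m : forall (c : R) (F : R -> R),
  is_der_ord m F -> is_der_ord m (fun y => c * F y).
Proof.
elim: m => [|m IH] c F.
  by move=> hF x /=; rewrite hF mulr0.
move=> hF; apply: der_ord_intro.
  move=> x y; rewrite (der_ord_add hF); ring.
move=> x; apply: ord_ext (IH c _ (der_ord_delta x hF)).
move=> y; rewrite /delta; ring.
Qed.

Lemma ord_mono {R : comNzRingType} m : forall F : R -> R,
  is_der_ord m F -> is_der_ord m.+1 F.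
Proof.
elim: m => [|m IH] F hF.
  apply: der_ord_intro; first by move=> x y; rewrite !hF addr0.
  by move=> x y; rewrite /delta !hF !mul0r !subr0.
apply: der_ord_intro; first exact: der_ord_add hF.
move=> x; apply: IH; exact: der_ord_delta.
Qed.

Lemma ord_mono_le {R : comNzRingType} m k (F : R -> R) :
  is_der_ord m F -> (m <= k)%N -> is_der_ord k F.
Proof.
move=> hF; elim: k => [|k IH]; first by rewrite leqn0 => /eqP <-.
rewrite leq_eqVlt => /orP [/eqP <- //|]; rewrite ltnS => /IH; exact: ord_mono.
Qed.

Lemma der_ord1 {R : comNzRingType} (d : R -> R) : is_derivation d -> is_der_ord 1 d.
Proof.
move=> hd; apply: der_ord_intro; first exact: hd.1.
by move=> x y; rewrite /delta hd.2; ring.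
Qed.

Lemma ord_comp {R : comNzRingType} (d : R -> R) m : is_derivation d ->
  forall D : R -> R, is_der_ord m D -> is_der_ord m.+1 (d \o D).
Proof.
move=> hd; elim: m => [|m IH] D hD.
  by apply: ord_mono => x /=; rewrite hD (d0 hd).
apply: der_ord_intro.
  by move=> x y /=; rewrite (der_ord_add hD) hd.1.
move=> x.
have E : (fun y => (d (delta x D y) + D x * d y) + d x * D y) =1 delta x (d \o D).
  move=> y; rewrite /delta /= !dB // !hd.2; ring.
apply: (ord_ext E).
apply: ord_plus; last by apply: ord_scale.
apply: ord_plus; first exact: IH (der_ord_delta x hD).
apply: ord_scale; apply: ord_mono_le (der_ord1 hd) _; done.
Qed.

Lemma comp_list {R : comNzRingType} (L : seq (R -> R)) : L <> [::] ->
  (forall f, List.In f L -> is_derivation f) ->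
  is_der_ord (size L) (foldr (fun f g => f \o g) id L).
Proof.
elim: L => [//|a L IH] _ hL.
case: L IH hL => [|b L] IH hL.
  apply: ord_ext (der_ord1 (hL a (or_introl erefl))) => x //.
apply: ord_comp; first exact: hL a (or_introl erefl).
apply: IH => // f hf; apply: hL; right; exact: hf.
Qed.
Arguments comp_list {R L}.

Lemma delta_ext {R : comNzRingType} (x : R) F G : F =1 G -> delta x F =1 delta x G.
Proof. by move=> E y; rewrite /delta !E. Qed.

Lemma iter_ext {R : comNzRingType} (z : R) k F G : F =1 G ->
  iter k (delta z) F =1 iter k (delta z) G.
Proof. elim: k => [//|k IH] E /=; apply: delta_ext; exact: IH. Qed.

Lemma ord_iter_zero {R : comNzRingType} (z : R) m : forall D,
  is_der_ord m D -> iter m (delta z) D =1 (fun _ => 0).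
Proof.
elim: m => [|m IH] D hD; first exact: hD.
move=> y; rewrite iterSr; apply: IH; exact: der_ord_delta.
Qed.

Arguments ord_iter_zero {R} z {m D}.

Lemma step_alg {R : comNzRingType} (z : R) (d B A : R -> R) (k : nat) y :
  is_derivation d -> (forall w, A w = B (z * w) - B z * w - B w * z) ->
  delta z (fun y => d (A y) + B z * d y + k.+1%:R * d z * B y) y
  = d (delta z A y) + A z * d y + k.+2%:R * d z * A y.
Proof.
move=> hd hA; rewrite /delta !dB // !hd.2 !hA !mulrS.
set K := k%:R; ring.
Qed.

Lemma iter_comp {R : comNzRingType} (z : R) (d G : R -> R) k :
  is_derivation d ->
  iter k.+1 (delta z) (d \o G) =1
  (fun y => d (iter k.+1 (delta z) G y) + iter k (delta z) G z * d y
            + k.+1%:R * d z * iter k (delta z) G y).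
Proof.
move=> hd; elim: k => [|k IH] y.
  rewrite /= /delta /comp !dB // !hd.2 mulr1n; ring.
rewrite [LHS]/=. rewrite (delta_ext _ IH).
exact: step_alg.
Qed.

Lemma natr_nz {R : idomainType} (charR0 : [pchar R] =i pred0) n :
  (n.+1%:R : R) != 0.
Proof. by have /pcharf0P -> := charR0. Qed.

Lemma sigma_nz {R : idomainType} (charR0 : [pchar R] =i pred0) (z : R)
  (L : seq (R -> R)) : L <> [::] ->
  (forall f, List.In f L -> is_derivation f /\ f z != 0) ->
  iter (size L).-1 (delta z) (foldr (fun f g => f \o g) id L) z != 0.
Proof.
elim: L => [//|a L IH] _ hL.
have [ha haz] := hL a (or_introl erefl).
case: L IH hL => [|b L] IH hL; first by [].
have hL' : forall f, List.In f (b :: L) -> is_derivation f /\ f z != 0.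
  by move=> f hf; apply: hL; right.
have hne : b :: L <> [::] by [].
have IH' := IH hne hL'.
rewrite [size _]/= [_.-1]/=.
rewrite (iter_comp z _ (size L) ha).
have Z := ord_iter_zero z (comp_list hne
   (fun f hf => (hL' f hf).1)).
rewrite [X in a X]Z (d0 ha) add0r.
set s := iter _ _ _ z.
have -> : s * a z + (size L).+1%:R * a z * s = ((size L).+1%:R + 1) * a z * s by ring.
rewrite natr1 !mulf_neq0 //; exact: natr_nz.
Qed.
Arguments sigma_nz {R} charR0 {z L}.

Lemma add0f {R : comNzRingType} (g : R -> R) :
  (forall x y, g (x + y) = g x + g y) -> g 0 = 0.
Proof. move=> gA; apply: (addrI (g 0)); by rewrite -gA !addr0. Qed.
Arguments add0f {R g}.

Lemma addmuln {R : comNzRingType} (g : R -> R) u t :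
  (forall x y, g (x + y) = g x + g y) -> g (u *+ t) = g u *+ t.
Proof.
move=> gA; elim: t => [|t IH]; first by rewrite !mulr0n (add0f gA).
by rewrite !mulrS gA IH.
Qed.
Arguments addmuln {R g} u t.

Lemma bad_bound {R : idomainType} (charR0 : [pchar R] =i pred0) (g : R -> R) w u :
  (forall x y, g (x + y) = g x + g y) -> (g w != 0 \/ g u != 0) ->
  exists b, forall t, (b < t)%N -> g (w + u *+ t) != 0.
Proof.
move=> gA hwu.
case: (classic (exists t0, g (w + u *+ t0) = 0)) => [[t0 h0]|H]; last first.
  exists 0%N => t _; apply/eqP => h; apply: H; by exists t.
exists t0 => t lt; apply/eqP => ht.
rewrite gA (addmuln _ _ gA) in h0; rewrite gA (addmuln _ _ gA) in ht.
have E : g u *+ (t - t0) = 0.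
  apply: (addrI (g u *+ t0)); rewrite addr0 -mulrnDr subnKC ?(ltnW lt) //.
  by apply: (addrI (g w)); rewrite ht h0.
move: E => /eqP; rewrite -mulr_natr mulf_eq0.
have /pcharf0P -> := charR0.
rewrite subn_eq0 leqNgt lt orbF => /eqP gu0.
move: h0; rewrite gu0 mul0rn addr0 => gw0.
by case: hwu; rewrite ?gw0 ?gu0 eqxx.
Qed.
Arguments bad_bound {R} charR0 {g w u}.

Lemma list_bound {R : idomainType} (charR0 : [pchar R] =i pred0)
  (L : seq (R -> R)) w u :
  (forall f, List.In f L -> (forall x y, f (x + y) = f x + f y) /\
                            (f w != 0 \/ f u != 0)) ->
  exists B, forall t, (B < t)%N -> forall f, List.In f L -> f (w + u *+ t) != 0.
Proof.
elim: L => [|a L IH] hL; first by exists 0%N.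
have [B hB] := IH (fun f hf => hL f (or_intror hf)).
have [ha1 ha2] := hL a (or_introl erefl).
have [b hb] := bad_bound charR0 ha1 ha2.
exists (maxn B b) => t; rewrite gtn_max => /andP [h1 h2] f [<-|hf].
  exact: hb.
exact: hB.
Qed.
Arguments list_bound {R} charR0 {L w u}.

Lemma exists_common {R : idomainType} (charR0 : [pchar R] =i pred0)
  (L : seq (R -> R)) :
  (forall f, List.In f L -> is_derivation f /\ exists x, f x != 0) ->
  exists z, forall f, List.In f L -> f z != 0.
Proof.
elim: L => [|a L IH] hL; first by exists 0.
have [z hz] := IH (fun f hf => hL f (or_intror hf)).
have [ha [x0 hx0]] := hL a (or_introl erefl).
have hyp : forall f, List.In f (a :: L) -> (forall x y, f (x + y) = f x + f y) /\
                            (f z != 0 \/ f x0 != 0).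
  move=> f [<-|h]; first by split; [exact: ha.1 | right].
  split; [exact: (hL f (or_intror h)).1.1 | left; exact: hz].
have [B hB] := list_bound charR0 hyp.
by exists (z + x0 *+ B.+1) => f hf; exact: hB (ltnSn B) f hf.
Qed.
Arguments exists_common {R} charR0 {L}.

Lemma in_map_seq {I T : Type} (d : I -> T) s f :
  List.In f [seq d i | i <- s] -> exists i, f = d i.
Proof.
elim: s => [//|a s IH] /= [<-|h]; [by exists a | exact: IH].
Qed.

Unset Implicit Arguments.

Theorem theorem1p2 (R : idomainType) (charR0 : [pchar R] =i pred0)
  (n : nat) (n_gt0 : (0 < n)%N) (d : 'I_n -> R -> R) :
  (forall i, is_derivation (d i)) ->
  (forall i, exists x, d i x != 0) ->
  is_der_ord n (comp_ders d) /\ ~ is_der_ord n.-1 (comp_ders d).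
Proof.
move=> hder hnz.
set L := [seq d i | i <- enum 'I_n].
have inL : forall f, List.In f L -> exists i, f = d i by move=> f; exact: in_map_seq.
have sizeL : size L = n by rewrite size_map size_enum_ord.
have hne : L <> [::] by move=> h; move: sizeL n_gt0; rewrite h => /= <-.
have hL : forall f, List.In f L -> is_derivation f.
  by move=> f /inL [i ->]; exact: hder.
rewrite /comp_ders -/L; split.
  rewrite -{1}sizeL; exact: comp_list hne hL.
move=> H.
have [z hz] : exists z, forall f, List.In f L -> f z != 0.
  apply: (exists_common charR0) => f hf; split; first exact: hL.
  by have [i ->] := inL f hf; exact: hnz.
have := sigma_nz charR0 hne (fun f hf => conj (hL f hf) (hz f hf)).
by rewrite sizeL (ord_iter_zero z H z) eqxx.
Qed.
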